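(* Assume the standing setup with $\beta=1/\gamma$, where $\gamma$ satisfies (A1) and (A2), and let $Y(t)$ be the solution of the gradient flow of relative entropy with arbitrary initial data $Y_0$. If $t_i\to\infty$ is a sequence of times with $\operatorname{diam}Y(t_i)\to\infty$, then a subsequence of $Y(t_i)/\operatorname{diam}Y(t_i)$ converges to $Y_\infty=(y_1^\infty,\dots,y_n^\infty)\in(\mathbb{R}^s)^n$ consisting of $n$ pairwise distinct points.
   Context: Standing setup. Fix integers $s\ge 1$ and $n>s+1$. Let $\mathcal{P}_n=\{(i,j): i,j\in\{1,\dots,n\},\ i\neq j\}$. Let $(p_{ij})_{i\neq j}$ be a probability distribution on $\mathcal{P}_n$ (so $\sum_{i\neq j}p_{ij}=1$) with $p_{ij}=p_{ji}>0$ for all $i\neq j$. For points $Y=(y_1,\dots,y_n)$ with $y_i\in\mathbb{R}^s$ define $q_{ij}=\beta(|y_i-y_j|^2)/\sum_{k\neq \ell}\beta(|y_k-y_\ell|^2)$ for $i\neq j$, and the relative entropy $\mathcal{C}(Y)=\sum_{i\neq j}p_{ij}\log(p_{ij}/q_{ij})$. The gradient flow of $\mathcal{C}$ is the ODE system $$\frac{dy_i}{dt}=4\sum_{j\neq i}(p_{ij}-q_{ij})(y_i-y_j)(\log\beta)'(|y_i-y_j|^2),\qquad i=1,\dots,n,$$ with solution $Y(t)$ existing for all $t\ge0$. Conditions: (A1) $\gamma:[0,\infty)\to(0,\infty)$ is smooth and convex with $\gamma(0)=1$, $\gamma'\ge0$, $\lim_{x\to\infty}\gamma(x)=\infty$;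 (A2) $\sup_{x\ge0}(\log\gamma)'(x)<\infty$; and $\beta:=1/\gamma$. $\operatorname{diam}Y=\max_{i,j}|y_i-y_j|$. *)

(* Defs.v *)
From HB Require Import structures.
From mathcomp Require Import all_boot all_order all_algebra.
From mathcomp Require Import all_classical all_reals all_analysis.
Set Implicit Arguments. Unset Strict Implicit. Unset Printing Implicit Defensive.
Import Order.TTheory GRing.Theory Num.Theory.
Import numFieldNormedType.Exports.
Local Open Scope classical_set_scope.
Local Open Scope ring_scope.

Section Defs.
Variable R : realType.

Definition smooth (f : R -> R) : Prop :=
  forall (k : nat) (x : R), derivable (derive1n k f) x 1.

Definition convex_nonneg (f : R -> R) : Prop :=
  forall x y l : R, 0 <= x -> 0 <= y -> 0 <= l <= 1 ->
    f (l * x + (1 - l) * y) <= l * f x + (1 - l) * f y.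

Definition A1 (g : R -> R) : Prop :=
  smooth g /\ convex_nonneg g /\ (forall x, 0 <= x -> 0 < g x) /\ g 0 = 1 /\
  (forall x, 0 <= x -> 0 <= derive1 g x) /\ (g x @[x --> +oo] --> +oo).

Definition A2 (g : R -> R) : Prop :=
  exists M : R, forall x, 0 <= x -> derive1 (fun z => ln (g z)) x <= M.

Definition beta (g : R -> R) (x : R) : R := (g x)^-1.

Variables n s : nat.

Definition d2 (Y : 'M[R]_(n, s)) (i j : 'I_n) : R :=
  \sum_(k < s) (Y i k - Y j k) ^+ 2.

Definition diam (Y : 'M[R]_(n, s)) : R :=
  \big[Num.max/0]_(i < n) \big[Num.max/0]_(j < n) Num.sqrt (d2 Y i j).

Definition qmat (g : R -> R) (Y : 'M[R]_(n, s)) (i j : 'I_n) : R :=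
  beta g (d2 Y i j) /
  \sum_(k < n) \sum_(l < n | l != k) beta g (d2 Y k l).

(* right-hand side of the gradient flow; row i is dy_i/dt *)
Definition flow_rhs (g : R -> R) (p : 'I_n -> 'I_n -> R) (Y : 'M[R]_(n, s))
  : 'M[R]_(n, s) :=
  \matrix_(i < n, k < s)
    (4 * \sum_(j < n | j != i)
       (p i j - qmat g Y i j) * (Y i k - Y j k) *
       derive1 (fun x => ln (beta g x)) (d2 Y i j)).

Definition prob_pairs (p : 'I_n -> 'I_n -> R) : Prop :=
  (forall i j, i != j -> 0 < p i j /\ p i j = p j i) /\
  \sum_(i < n) \sum_(j < n | j != i) p i j = 1.
End Defs.

(* Main.v *)
Require Import Defs.
From HB Require Import structures.
From mathcomp Require Import all_boot all_order all_algebra.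
From mathcomp Require Import all_classical all_reals all_analysis.
From mathcomp Require Import ring lra.
Import Order.TTheory GRing.Theory Num.Theory.
Import numFieldNormedType.Exports.
Local Open Scope classical_set_scope.
Local Open Scope ring_scope.
Section A.
Context {R : realType}.
Lemma phi_ge (phi : nat -> nat) : (forall k, (phi k < phi k.+1)%N) -> forall k, (k <= phi k)%N.
Proof. move=> H; elim=> [//|k IH]; exact: leq_ltn_trans IH (H k). Qed.

Lemma subseq_cvg {T : topologicalType} (u : nat -> T) (l : T) (phi : nat -> nat) :
  (forall k, (phi k < phi k.+1)%N) -> u @ \oo --> l -> (fun k => u (phi k)) @ \oo --> l.
Proof.
move=> H ul.
have pinf : phi @ \oo --> \oo.
  apply/cvgnyPge => A; near=> k; have Hk := phi_ge _ H k; suff: (A <= k)%N by move=> Ak; apply: (leq_trans Ak Hk).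
  by near: k; exists A.
apply: cvg_comp; first exact: pinf. exact: ul.
Unshelve. all: end_near. Qed.

Lemma bnd_fun (u : nat -> R) (B : R) : (forall k, `|u k| <= B) -> bounded_fun u.
Proof.
move=> H; exists B; split; first exact: num_real.
move=> M BM k _; apply: le_trans (H k) _; exact: ltW.
Qed.

Lemma incr_lt (f : nat -> nat) : increasing_seq f -> forall k, (f k < f k.+1)%N.
Proof. move=> H k; have h : (f k.+1 <= f k)%N = (k.+1 <= k)%N := H k.+1 k. by rewrite ltnNge h ltnn. Qed.

Lemma multi_bw {I : eqType} (a : I -> nat -> R) (l : seq I) :
  (forall i, exists B : R, forall k, `|a i k| <= B) ->
  exists phi : nat -> nat, (forall k, (phi k < phi k.+1)%N) /\
    forall i, i \in l -> cvgn (fun k => a i (phi k)).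
Proof.
move=> bnd; elim: l => [|i l [phi [Hphi IH]]].
  by exists id; split => // i.
have [B HB] := bnd i.
have [psi Hpsi cv] := bolzano_weierstrass (bnd_fun (fun k => a i (phi k)) B (fun k => HB (phi k))).
exists (fun k => phi (psi k)); split.
  move=> k; have := incr_lt _ Hpsi k => h.
  elim: (psi k.+1) h => [//|m IHm]; rewrite ltnS leq_eqVlt => /orP[/eqP <-|/IHm h2].
    exact: Hphi.
  exact: ltn_trans h2 (Hphi m).
move=> j; rewrite inE => /orP[/eqP ->|jl].
  exact: cv.
have /cvg_ex [L HL] := IH j jl.
apply/cvg_ex; exists L; exact: (subseq_cvg (fun k => a j (phi k)) L psi (incr_lt _ Hpsi) HL).
Qed.

Lemma mx_cvg_entries {m n : nat} (M : nat -> 'M[R]_(m, n)) (L : 'M[R]_(m, n)) :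
  (forall i j, (fun k => M k i j) @ \oo --> L i j) -> M @ \oo --> L.
Proof.
move=> H; apply/cvgrPdist_le => /= e e0.
near=> k.
rewrite /Num.Def.normr/= mx_normrE (bigmax_le _ (ltW e0))//= => ij _.
rewrite !mxE/=.
move: ij; near: k; apply: filter_forall => /= ij.
exact: ((cvgrPdist_le _ _).1 (H ij.1 ij.2)).
Unshelve. all: by end_near. Qed.

Lemma nonincr_pos (f : R -> R) :
  (forall x : R, 0 < x -> derivable f x 1 /\ derive1 f x <= 0) ->
  forall x y : R, 0 < x -> x <= y -> f y <= f x.
Proof.
move=> H x y x0 xy.
have y0 : 0 < y by apply: lt_le_trans xy.
apply: (@ler0_derive1_le_oo R f 0 (y + 1)).
- by move=> z; rewrite in_itv /= => /andP[z0 _]; exact: (H z z0).1.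
- by move=> z; rewrite in_itv /= => /andP[z0 _]; exact: (H z z0).2.
- move=> z; rewrite inE /= in_itv /= => /andP[z0 _].
  exact/differentiable_continuous/derivable1_diffP/(H z z0).1.
- by rewrite in_itv /= y0 /= ltrDl.
- by rewrite in_itv /= x0 /= (le_lt_trans xy) // ltrDl.
- exact: xy.
Qed.

Lemma bigmax_cases {m : nat} (F : 'I_m -> R) :
  \big[Num.max/0]_i F i = 0 \/ exists i, \big[Num.max/0]_i F i = F i.
Proof.
apply: (big_ind (fun x => x = 0 \/ exists i, x = F i)); first by left.
  move=> x y Hx Hy; case: (leP x y) => _; [exact: Hy | exact: Hx].
by move=> i _; right; exists i.
Qed.
End A.
Section B.
Context {R : realType}.

Lemma der_sum {m : nat} (P : pred 'I_m) (h : 'I_m -> R -> R) (dh : 'I_m -> R) (x : R) :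
  (forall i, P i -> is_derive x 1 (h i) (dh i)) ->
  is_derive x 1 (fun y => \sum_(i < m | P i) h i y) (\sum_(i < m | P i) dh i).
Proof.
move=> H.
have -> : (fun y => \sum_(i < m | P i) h i y) = \sum_(i < m) (fun y => if P i then h i y else 0).
  by rewrite fct_sumE; apply/funext => y; rewrite big_mkcond.
rewrite [X in is_derive _ _ _ X]big_mkcond /=.
apply: (@is_derive_sum _ _ _ _ (fun i y => if P i then h i y else 0)) => i; case Pi: (P i); [exact: H | exact: is_derive_cst].
Qed.

Lemma der_scale (f : R -> R) (c df x : R) :
  is_derive x 1 f df -> is_derive x 1 (fun y => c * f y) (c * df).
Proof.
move=> H; have := is_deriveZ c H; rewrite /GRing.scale /=.
by [].
Qed.

Lemma der_comp (f g : R -> R) (a b x : R) :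
  is_derive (g x) 1 f a -> is_derive x 1 g b -> is_derive x 1 (fun y => f (g y)) (a * b).
Proof. move=> H1 H2; exact: (is_derive1_comp H1 H2). Qed.

Lemma der_add (f g : R -> R) (a b x : R) :
  is_derive x 1 f a -> is_derive x 1 g b -> is_derive x 1 (fun y => f y + g y) (a + b).
Proof. move=> H1 H2; exact: (is_deriveD H1 H2). Qed.

Lemma der_sub (f g : R -> R) (a b x : R) :
  is_derive x 1 f a -> is_derive x 1 g b -> is_derive x 1 (fun y => f y - g y) (a - b).
Proof. move=> H1 H2; exact: (is_deriveB H1 H2). Qed.

Lemma der_mul (f g : R -> R) (a b x : R) :
  is_derive x 1 f a -> is_derive x 1 g b -> is_derive x 1 (fun y => f y * g y) (f x * b + g x * a).
Proof. move=> H1 H2; exact: (is_deriveM H1 H2). Qed.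

Lemma der_opp (f : R -> R) (a x : R) :
  is_derive x 1 f a -> is_derive x 1 (fun y => - f y) (- a).
Proof. move=> H1; exact: (is_deriveN H1). Qed.

Lemma sum_cond_diag {m : nat} (f : 'I_m -> R) i : f i = 0 ->
  \sum_(j < m | j != i) f j = \sum_(j < m) f j.
Proof. by move=> H; rewrite [RHS](bigD1 i) //= H add0r. Qed.

End B.
Section C.
Context {R : realType} {n s : nat} (gam : R -> R) (p : 'I_n -> 'I_n -> R).
Context (hA1 : A1 gam).

Lemma gam_pos (x : R) : 0 <= x -> 0 < gam x.
Proof. by case: hA1 => _ [_ [H _]]; exact: H. Qed.

Lemma gam_der (x : R) : derivable gam x 1.
Proof. by case: hA1 => H _; have := H 0%N x; rewrite derive1n0. Qed.

Lemma beta_pos (x : R) : 0 <= x -> 0 < beta gam x.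
Proof. by move=> x0; rewrite /beta invr_gt0 gam_pos. Qed.

Lemma ell_der (x : R) : 0 <= x -> derivable (fun y => ln (beta gam y)) x 1.
Proof.
move=> x0.
have g0 : gam x != 0 by rewrite gt_eqF // gam_pos.
have Hb := is_deriveV g0 (derivableP (gam_der x)).
have Hl := is_derive1_ln (beta_pos _ x0).
have H := der_comp _ _ _ _ _ Hl Hb. by case: H.
Qed.

Lemma expR_ell (x : R) : 0 <= x -> expR (ln (beta gam x)) = beta gam x.
Proof. by move=> x0; rewrite lnK // posrE beta_pos. Qed.

Lemma d2_ge0 (M : 'M[R]_(n, s)) i j : 0 <= d2 M i j.
Proof. by apply: sumr_ge0 => k _; exact: sqr_ge0. Qed.

Lemma d2_sym (M : 'M[R]_(n, s)) i j : d2 M i j = d2 M j i.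
Proof. by apply: eq_bigr => k _; rewrite -sqrrN opprB. Qed.

Lemma d2_ii (M : 'M[R]_(n, s)) i : d2 M i i = 0.
Proof. by rewrite /d2 big1 // => k _; rewrite subrr expr0n. Qed.

Lemma qmat_sym (M : 'M[R]_(n, s)) i j : qmat gam M i j = qmat gam M j i.
Proof. by rewrite /qmat d2_sym. Qed.

End C.
Section D.
Context {R : realType} {n s : nat} (gam : R -> R) (p : 'I_n -> 'I_n -> R).
Context (hA1 : A1 gam) (Y : R -> 'M[R]_(n, s)).
Context (hY : forall u : R, 0 < u -> is_derive u 1 Y (flow_rhs gam p (Y u))).

Local Notation F u := (flow_rhs gam p (Y u)).

Lemma der_sumT {m : nat} (h : 'I_m -> R -> R) (dh : 'I_m -> R) (x : R) :
  (forall i, is_derive x 1 (h i) (dh i)) ->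
  is_derive x 1 (fun y => \sum_(i < m) h i y) (\sum_(i < m) dh i).
Proof. by move=> H; apply: (der_sum xpredT) => i _; exact: H. Qed.

Lemma entry_der (u : R) i k : 0 < u ->
  is_derive u 1 (fun x => Y x i k) (F u i k).
Proof.
move=> u0; have [dY eY] := hY _ u0.
have dE : derivable (fun x => Y x i k) u 1 by move/derivable_mxP: dY => /(_ i k).
apply: DeriveDef => //.
have := derive_mx dY; rewrite eY => /(congr1 (fun M : 'M[R]_(n, s) => M i k)).
by move=> ->; rewrite [RHS]mxE.
Qed.

Lemma d2_der (u : R) i j : 0 < u ->
  is_derive u 1 (fun x => d2 (Y x) i j)
    (\sum_(k < s) 2 * (Y u i k - Y u j k) * (F u i k - F u j k)).
Proof.
move=> u0; rewrite /d2; apply: der_sumT => k.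
have H := der_sub _ _ _ _ _ (entry_der _ i k u0) (entry_der _ j k u0).
have H2 := der_mul _ _ _ _ _ H H.
have -> : (fun x => (Y x i k - Y x j k) ^+ 2) = (fun y => (Y y i k - Y y j k) * (Y y i k - Y y j k)).
  by apply/funext => y; rewrite expr2.
apply: is_derive_eq H2 _; rewrite /=; ring.
Qed.

End D.
Section E.
Context {R : realType}.

Lemma antisym_id {n : nat} (A : 'I_n -> 'I_n -> R) (G : 'I_n -> R) :
  (forall i j, A j i = - A i j) ->
  \sum_i \sum_j A i j * (G i - G j) = 2 * \sum_i G i * \sum_j A i j.
Proof.
move=> hA.
have E1 : \sum_i \sum_j A i j * G j = - \sum_i \sum_j A i j * G i.
  rewrite exchange_big /= -sumrN; apply: eq_bigr => j _.
  rewrite -sumrN; apply: eq_bigr => i _; by rewrite (hA j i) mulNr.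
have -> : \sum_i \sum_j A i j * (G i - G j) =
    \sum_i \sum_j A i j * G i - \sum_i \sum_j A i j * G j.
  rewrite -sumrB; apply: eq_bigr => i _; rewrite -sumrB; apply: eq_bigr => j _.
  by rewrite mulrBr.
rewrite E1 opprK mulr2n; rewrite mulrDl mul1r; congr (_ + _);
  by apply: eq_bigr => i _; rewrite mulr_sumr; apply: eq_bigr => j _; rewrite mulrC.
Qed.

Lemma antisym_sum {n : nat} (A : 'I_n -> 'I_n -> R) :
  (forall i j, A j i = - A i j) -> \sum_i \sum_j A i j = 0.
Proof.
move=> hA.
have E1 : \sum_i \sum_j A i j = - \sum_i \sum_j A i j.
  rewrite {1}exchange_big /= -sumrN; apply: eq_bigr => j _.
  rewrite -sumrN; apply: eq_bigr => i _; by rewrite (hA j i).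
have : 2 * \sum_i \sum_j A i j = 0 by rewrite mulr2n mulrDl mul1r {1}E1 addNr.
by move/eqP; rewrite mulf_eq0 pnatr_eq0 /= => /eqP.
Qed.

Lemma key_alg {n s : nat} (y Fm : 'M[R]_(n, s)) (w : 'I_n -> 'I_n -> R) :
  (forall i j, w j i = w i j) ->
  (forall i k, Fm i k = 4 * \sum_j w i j * (y i k - y j k)) ->
  \sum_i \sum_j w i j * (\sum_k 2 * (y i k - y j k) * (Fm i k - Fm j k)) =
  \sum_i \sum_k Fm i k ^+ 2.
Proof.
move=> hw hF.
have -> : \sum_i \sum_j w i j * (\sum_k 2 * (y i k - y j k) * (Fm i k - Fm j k)) =
   \sum_k (2 * \sum_i \sum_j (w i j * (y i k - y j k)) * (Fm i k - Fm j k)).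
  under eq_bigr => i _ do under eq_bigr => j _ do rewrite mulr_sumr.
  under eq_bigr => i _ do rewrite exchange_big /=.
  rewrite exchange_big /=; apply: eq_bigr => k _.
  rewrite mulr_sumr; apply: eq_bigr => i _.
  rewrite mulr_sumr; apply: eq_bigr => j _.
  ring.
rewrite [RHS]exchange_big /=; apply: eq_bigr => k _.
rewrite (antisym_id (fun i j => w i j * (y i k - y j k)) (fun i => Fm i k)); last first.
  by move=> i j; rewrite hw -mulrN opprB.
rewrite mulrA; under [RHS]eq_bigr => i _ do rewrite expr2 {2}hF.
rewrite mulr_sumr; apply: eq_bigr => i _; ring.
Qed.
End E.
Definition Zf {R : realType} {n s : nat} (gam : R -> R) (M : 'M[R]_(n, s)) : R :=
  \sum_(k < n) \sum_(l < n | l != k) beta gam (d2 M k l).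

Definition En {R : realType} {n s : nat} (gam : R -> R) (p : 'I_n -> 'I_n -> R)
  (M : 'M[R]_(n, s)) : R :=
  - (\sum_(i < n) \sum_(j < n | j != i) p i j * ln (beta gam (d2 M i j))) + ln (Zf gam M).

Section F.
Context {R : realType} {n s : nat} (gam : R -> R) (p : 'I_n -> 'I_n -> R).
Context (hA1 : A1 gam) (hp : prob_pairs p) (hn : (1 < n)%N).

Lemma term_le_sum {m : nat} (P : pred 'I_m) (f : 'I_m -> R) j :
  (forall i, P i -> 0 <= f i) -> P j -> f j <= \sum_(i < m | P i) f i.
Proof.
move=> H Pj; rewrite (bigD1 j) //= lerDl; apply: sumr_ge0 => i /andP[Pi _].
exact: H.
Qed.

Lemma beta_le_Z (M : 'M[R]_(n, s)) a b : b != a -> beta gam (d2 M a b) <= Zf gam M.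
Proof.
move=> ba; apply: (le_trans _ (term_le_sum xpredT (fun k => \sum_(l < n | l != k) beta gam (d2 M k l)) a _ _)) => //.
- by apply: (term_le_sum (fun l => l != a) (fun l => beta gam (d2 M a l))) => // l _;
    apply: ltW; apply: (beta_pos gam hA1); exact: d2_ge0.
- move=> k _; apply: sumr_ge0 => l _; apply: ltW; apply: (beta_pos gam hA1); exact: d2_ge0.
Qed.

Lemma Z_pos (M : 'M[R]_(n, s)) : 0 < Zf gam M.
Proof.
have h0 : (0 < n)%N by apply: ltn_trans hn.
pose a := Ordinal h0; pose b := Ordinal hn.
have ba : b != a by [].
apply: (lt_le_trans _ (beta_le_Z M a b ba)).
apply: (beta_pos gam hA1); exact: d2_ge0.
Qed.

Lemma p_sym i j : p j i = p i j.
Proof.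
case: (eqVneq i j) => [-> //|ij].
by case: hp => H _; have [_ ->] := H i j ij.
Qed.

End F.
Section G.
Context {R : realType} {n s : nat} (gam : R -> R) (p : 'I_n -> 'I_n -> R).
Context (hA1 : A1 gam) (hp : prob_pairs p) (hn : (1 < n)%N) (Y : R -> 'M[R]_(n, s)).
Context (hY : forall u : R, 0 < u -> is_derive u 1 Y (flow_rhs gam p (Y u))).

Local Notation F u := (flow_rhs gam p (Y u)).
Local Notation ell := (fun x => ln (beta gam x)).
Local Notation dd u i j := (\sum_(k < s) 2 * (Y u i k - Y u j k) * (F u i k - F u j k)).
Local Notation L u i j := (derive1 ell (d2 (Y u) i j)).

Lemma ell_d2_der (u : R) i j : 0 < u ->
  is_derive u 1 (fun x => ln (beta gam (d2 (Y x) i j))) (L u i j * dd u i j).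
Proof.
move=> u0.
have H1 := derivableP (ell_der gam hA1 _ (d2_ge0 (Y u) i j)).
rewrite -derive1E in H1.
exact: (der_comp _ _ _ _ _ H1 (d2_der gam p Y hY u i j u0)).
Qed.

Lemma beta_d2_der (u : R) i j : 0 < u ->
  is_derive u 1 (fun x => beta gam (d2 (Y x) i j))
    (beta gam (d2 (Y u) i j) * (L u i j * dd u i j)).
Proof.
move=> u0.
have -> : (fun x => beta gam (d2 (Y x) i j)) = (fun x => expR (ln (beta gam (d2 (Y x) i j)))).
  by apply/funext => x; rewrite expR_ell // d2_ge0.
have H := der_comp _ _ _ _ _ (is_derive_expR _) (ell_d2_der u i j u0).
by rewrite expR_ell // ?d2_ge0 in H.
Qed.


Lemma Z_der (u : R) : 0 < u ->
  is_derive u 1 (fun x => Zf gam (Y x))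
    (\sum_(k < n) \sum_(l < n | l != k) beta gam (d2 (Y u) k l) * (L u k l * dd u k l)).
Proof.
move=> u0; rewrite /Zf; apply: der_sumT => k; apply: der_sum => l _.
exact: beta_d2_der.
Qed.

Lemma S_der (u : R) : 0 < u ->
  is_derive u 1 (fun x => \sum_(i < n) \sum_(j < n | j != i) p i j * ln (beta gam (d2 (Y x) i j)))
    (\sum_(i < n) \sum_(j < n | j != i) p i j * (L u i j * dd u i j)).
Proof.
move=> u0; apply: der_sumT => i; apply: der_sum => j _.
apply: der_scale; exact: ell_d2_der.
Qed.

Lemma En_der (u : R) : 0 < u ->
  is_derive u 1 (fun x => En gam p (Y x)) (- \sum_(i < n) \sum_(k < s) F u i k ^+ 2).
Proof.
move=> u0.
have HlZ := der_comp _ _ _ _ _ (is_derive1_ln (Z_pos gam hA1 hn (Y u))) (Z_der u u0).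
have H := der_add _ _ _ _ _ (der_opp _ _ _ (S_der u u0)) HlZ.
rewrite /En; apply: is_derive_eq H _.
pose w i j := (p i j - qmat gam (Y u) i j) * L u i j.
have hw : forall i j, w j i = w i j.
  by move=> i j; rewrite /w p_sym // qmat_sym d2_sym.
have hF : forall i k, F u i k = 4 * \sum_j w i j * (Y u i k - Y u j k).
  move=> i k; rewrite mxE; congr (_ * _).
  rewrite -(sum_cond_diag _ i); last by rewrite subrr mulr0.
  by apply: eq_bigr => j _; rewrite /w mulrAC.
rewrite -(key_alg (Y u) (F u) w hw hF).
have -> : \sum_i \sum_j w i j * dd u i j = \sum_i \sum_(j | j != i) w i j * dd u i j.
  apply: eq_bigr => i _; rewrite sum_cond_diag // big1 ?mulr0 // => k _.
  by rewrite subrr mulr0 mul0r.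
rewrite /w.
under [in RHS]eq_bigr => i _ do under eq_bigr => j _ do
  rewrite mulrBl mulrBl /qmat.
under [in RHS]eq_bigr => i _ do rewrite sumrB.
rewrite sumrB opprB addrC /Zf; congr (_ - _).
  rewrite mulr_sumr; apply: eq_bigr => k _; rewrite mulr_sumr; apply: eq_bigr => l _.
  ring.
by apply: eq_bigr => i _; apply: eq_bigr => j _; ring.
Qed.

Lemma En_noninc (x y : R) : 0 < x -> x <= y -> En gam p (Y y) <= En gam p (Y x).
Proof.
apply: (nonincr_pos (fun u => En gam p (Y u))) => u u0.
have [d e] := En_der u u0; split => //.
rewrite derive1E e oppr_le0; apply: sumr_ge0 => i _; apply: sumr_ge0 => k _.
exact: sqr_ge0.
Qed.

Lemma Cen_der (u : R) k : 0 < u ->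
  is_derive u 1 (fun x => \sum_(i < n) Y x i k) 0.
Proof.
move=> u0; apply: is_derive_eq (der_sumT _ _ _ (fun i => entry_der gam p Y hY u i k u0)) _.
pose w i j := (p i j - qmat gam (Y u) i j) * L u i j.
have hw : forall i j, w j i = w i j.
  by move=> i j; rewrite /w p_sym // qmat_sym d2_sym.
have -> : \sum_i F u i k = 4 * \sum_i \sum_j w i j * (Y u i k - Y u j k).
  rewrite mulr_sumr; apply: eq_bigr => i _; rewrite mxE; congr (_ * _).
  rewrite -(sum_cond_diag _ i); last by rewrite subrr mulr0.
  by apply: eq_bigr => j _; rewrite /w mulrAC.
rewrite antisym_sum ?mulr0 // => i j.
by rewrite hw -mulrN opprB.
Qed.

Lemma Cen_const (x y : R) k : 0 < x -> 0 < y ->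
  \sum_(i < n) Y x i k = \sum_(i < n) Y y i k.
Proof.
wlog xy : x y / x <= y.
  move=> H x0 y0; case: (leP x y) => h; first exact: H.
  by symmetry; apply: H => //; exact: ltW.
move=> x0 y0; apply/eqP; rewrite eq_le; apply/andP; split.
- rewrite -lerN2; apply: (nonincr_pos (fun u => - \sum_(i < n) Y u i k)) => // u u0.
  have [d e] := der_opp _ _ _ (Cen_der u k u0); split => //.
  by rewrite derive1E e oppr0.
- apply: (nonincr_pos (fun u => \sum_(i < n) Y u i k)) => // u u0.
  have [d e] := Cen_der u k u0; split => //.
  by rewrite derive1E e.
Qed.
End G.
Section H.
Context {R : realType} {n s : nat} (gam : R -> R) (p : 'I_n -> 'I_n -> R).
Context (hA1 : A1 gam) (hp : prob_pairs p) (hn : (1 < n)%N).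

Lemma p_pos i j : j != i -> 0 < p i j.
Proof. move=> ji; case: hp => H _; have ij : i != j by rewrite eq_sym. by have [] := H i j ij. Qed.

Lemma q_pos (M : 'M[R]_(n, s)) i j : 0 < qmat gam M i j.
Proof.
by rewrite /qmat divr_gt0 // ?(beta_pos gam hA1) ?d2_ge0 //; exact: (Z_pos gam hA1 hn).
Qed.

Lemma q_le1 (M : 'M[R]_(n, s)) i j : j != i -> qmat gam M i j <= 1.
Proof.
move=> ji; rewrite /qmat ler_pdivrMr ?mul1r; last exact: (Z_pos gam hA1 hn).
exact: (beta_le_Z gam hA1).
Qed.

Lemma En_eq (M : 'M[R]_(n, s)) :
  En gam p M = \sum_i \sum_(j | j != i) p i j * (- ln (qmat gam M i j)).
Proof.
have hq : forall i j, ln (qmat gam M i j) = ln (beta gam (d2 M i j)) - ln (Zf gam M).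
  move=> i j; have b0 := beta_pos gam hA1 _ (d2_ge0 M i j); have z0 := Z_pos gam hA1 hn M.
  rewrite /qmat lnM ?lnV // ?posrE ?invr_gt0 //; exact: (gam_pos gam hA1 _ (d2_ge0 M i j)).
under [RHS]eq_bigr => i _ do under eq_bigr => j _ do rewrite hq opprB mulrBr.
under [RHS]eq_bigr => i _ do rewrite sumrB.
rewrite sumrB /En addrC; congr (_ - _).
have := hp.2 => hs.
rewrite -[LHS]mul1r -hs mulr_suml; apply: eq_bigr => i _.
rewrite mulr_suml; apply: eq_bigr => j _; by rewrite mulrC.
Qed.

Lemma nlnq_ge0 (M : 'M[R]_(n, s)) i j : j != i -> 0 <= - ln (qmat gam M i j).
Proof. by move=> ji; rewrite oppr_ge0 ln_le0 // q_le1. Qed.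

Lemma term_le_En (M : 'M[R]_(n, s)) a b : b != a ->
  p a b * (- ln (qmat gam M a b)) <= En gam p M.
Proof.
move=> ba; rewrite En_eq.
have hnn : forall i j, j != i -> 0 <= p i j * - ln (qmat gam M i j).
  by move=> i j ji; rewrite mulr_ge0 ?nlnq_ge0 // ltW // p_pos.
apply: le_trans (term_le_sum xpredT (fun i => \sum_(j | j != i) p i j * - ln (qmat gam M i j)) a _ _) => //.
- exact: (term_le_sum (fun j => j != a) (fun j => p a j * - ln (qmat gam M a j)) b (hnn a)).
- by move=> i _; apply: sumr_ge0 => j; exact: hnn.
Qed.

Lemma En_ge0 (M : 'M[R]_(n, s)) : 0 <= En gam p M.
Proof.
have h0 : (0 < n)%N by apply: ltn_trans hn.
pose a := Ordinal h0; pose b := Ordinal hn.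
apply: le_trans (term_le_En M a b isT).
by rewrite mulr_ge0 ?nlnq_ge0 // ltW // p_pos.
Qed.

Definition Pinv := \sum_(i < n) \sum_(j < n | j != i) (p i j)^-1.

Lemma q_lower (M : 'M[R]_(n, s)) (E0 : R) a b : b != a -> En gam p M <= E0 ->
  expR (- (E0 * Pinv)) <= qmat gam M a b.
Proof.
move=> ba hE.
have pab := p_pos a b ba.
have E00 : 0 <= E0 := le_trans (En_ge0 M) hE.
rewrite -[qmat _ _ _ _]lnK ?posrE ?q_pos // ler_expR lerNl.
have h1 : - ln (qmat gam M a b) <= E0 / p a b.
  rewrite ler_pdivlMr // mulrC; exact: le_trans (term_le_En M a b ba) hE.
apply: le_trans h1 _; apply: (ler_wpM2l E00).
have hnn : forall i j, j != i -> 0 <= (p i j)^-1.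
  by move=> i j ji; rewrite invr_ge0 ltW // p_pos.
apply: le_trans (term_le_sum xpredT (fun i => \sum_(j | j != i) (p i j)^-1) a _ _) => //.
- exact: (term_le_sum (fun j => j != a) (fun j => (p a j)^-1) b (hnn a)).
- by move=> i _; apply: sumr_ge0 => j; exact: hnn.
Qed.
End H.
Section I.
Context {R : realType} {n s : nat} (gam : R -> R).
Context (hA1 : A1 gam) (hn : (1 < n)%N).

Lemma geom (M : 'M[R]_(n, s)) (c X : R) a b i j :
  0 < c -> 0 < X -> X = d2 M a b -> (forall k l, d2 M k l <= X) ->
  c <= qmat gam M a b -> 2 / c <= gam X -> j != i -> c / 2 * X <= d2 M i j.
Proof.
move=> c0 X0 Xab Xmax hq hg ji.
have d0 := d2_ge0 M i j.
have dX := Xmax i j.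
have gX := gam_pos gam hA1 _ (ltW X0).
have gd := gam_pos gam hA1 _ d0.
have z0 := Z_pos gam hA1 hn M.
have hbd := beta_le_Z gam hA1 M i j ji.
have h1 : c * gam X <= gam (d2 M i j).
  have : c * Zf gam M <= beta gam X.
    by move: hq; rewrite /qmat -Xab (ler_pdivlMr _ _ z0).
  rewrite /beta => h; have h2 : c * (gam (d2 M i j))^-1 <= (gam X)^-1.
    apply: le_trans h; rewrite ler_wpM2l // ?ltW //.
  by move: h2; rewrite ler_pdivrMr // mulrC -ler_pdivlMr // invrK.
pose r := d2 M i j / X.
have r0 : 0 <= r by rewrite /r divr_ge0 // ltW.
have r1 : r <= 1 by rewrite /r ler_pdivrMr // mul1r.
have rX : r * X = d2 M i j by rewrite /r divfK // gt_eqF.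
have hc : gam (r * X + (1 - r) * 0) <= r * gam X + (1 - r) * gam 0.
  by case: hA1 => _ [hcv _]; apply: hcv => //; [exact: ltW|rewrite r0 r1].
rewrite mulr0 addr0 rX in hc.
have g01 : gam 0 = 1 by case: hA1 => _ [_ [_ [H _]]].
rewrite g01 mulr1 in hc.
have cg : 2 <= c * gam X by move: hg; rewrite ler_pdivrMr // mulrC.
have key : c <= 2 * r by nra.
rewrite -rX; nra.
Qed.
End I.
Section J.
Context {R : realType} {n s : nat}.

Lemma diam_ge (M : 'M[R]_(n, s)) i j : Num.sqrt (d2 M i j) <= diam M.
Proof.
rewrite /diam; apply: le_trans (le_bigmax _ _ i).
exact: le_bigmax.
Qed.

Lemma diam_attained (M : 'M[R]_(n, s)) : 0 < diam M ->
  exists a b, diam M = Num.sqrt (d2 M a b).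
Proof.
rewrite /diam; case: (bigmax_cases (fun i => \big[Num.max/0]_(j < n) Num.sqrt (d2 M i j))) => [->|[a ->]].
  by rewrite ltxx.
case: (bigmax_cases (fun j => Num.sqrt (d2 M a j))) => [->|[b ->]].
  by rewrite ltxx.
by move=> _; exists a, b.
Qed.

Lemma d2_le_diam (M : 'M[R]_(n, s)) i j : d2 M i j <= diam M ^+ 2.
Proof.
rewrite -(sqr_sqrtr (d2_ge0 M i j)) lerXn2r // ?nnegrE ?sqrtr_ge0 ?diam_ge //.
exact: le_trans (sqrtr_ge0 _) (diam_ge M i j).
Qed.

Lemma entry_diff_le (M : 'M[R]_(n, s)) i j k : `|M i k - M j k| <= diam M.
Proof.
apply: le_trans (diam_ge M i j).
rewrite -sqrtr_sqr ler_sqrt ?d2_ge0 //.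
exact: (term_le_sum xpredT (fun l => (M i l - M j l) ^+ 2) k (fun l _ => sqr_ge0 _)).
Qed.

Lemma entry_bound (M : 'M[R]_(n, s)) i k : (0 < n)%N ->
  `|M i k| <= diam M + `|\sum_(j < n) M j k| / n%:R.
Proof.
move=> n0.
have nR : 0 < (n%:R : R) by rewrite ltr0n.
have -> : M i k = (\sum_(j < n) (M i k - M j k) + \sum_(j < n) M j k) / n%:R.
  rewrite sumrB addrNK sumr_const card_ord -[M i k *+ n]mulr_natr mulfK // gt_eqF //.

rewrite normrM normfV (gtr0_norm nR) ler_pdivrMr // mulrDl divfK ?gt_eqF //.
apply: le_trans (ler_normD _ _) _; rewrite lerD2r.
apply: le_trans (ler_norm_sum _ _ _) _.
apply: le_trans (_ : \sum_(j < n) diam M <= _).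
  by apply: ler_sum => j _; exact: entry_diff_le.
by rewrite sumr_const card_ord mulr_natr.
Qed.

Lemma d2_scale (M : 'M[R]_(n, s)) (a : R) i j : d2 (a *: M) i j = a ^+ 2 * d2 M i j.
Proof.
rewrite /d2 mulr_sumr; apply: eq_bigr => k _; rewrite !mxE -mulrBr exprMn //.
Qed.
End J.
Lemma d2_cvg {R : realType} {n s : nat} (N : nat -> 'M[R]_(n, s)) (L : 'M[R]_(n, s)) i j :
  N @ \oo --> L -> (fun k => d2 (N k) i j) @ \oo --> d2 L i j.
Proof.
move=> NL; rewrite /d2.
have ce : forall a b, (fun k => N k a b) @ \oo --> L a b.
  move=> a b; have h1 := @coord_continuous R n s a b L. exact: (@cvg_comp _ _ _ N (fun M => M a b) _ _ _ NL h1).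
have := @cvg_big R 'I_s +%R 0 (fun _ => true) add_continuous nat \oo
  (index_enum 'I_s) (fun l k => (N k i l - N k j l) ^+ 2) (fun l => (L i l - L j l) ^+ 2).
apply => // l _.
rewrite expr2; under eq_cvg do rewrite expr2.
by apply: cvgM; apply: cvgB; exact: ce.
Qed.

Theorem theorem1p3 (R : realType) (s n : nat) (gam : R -> R)
  (p : 'I_n -> 'I_n -> R) (Y : R -> 'M[R]_(n, s)) (t : nat -> R) :
  (1 <= s)%N -> (s.+1 < n)%N ->
  prob_pairs p -> A1 gam -> A2 gam ->
  (forall u : R, 0 < u -> is_derive u 1 Y (flow_rhs gam p (Y u))) ->
  t @ \oo --> +oo ->
  (fun k => diam (Y (t k))) @ \oo --> +oo ->
  exists (phi : nat -> nat) (Yinf : 'M[R]_(n, s)),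
    (forall k, (phi k < phi k.+1)%N) /\
    (fun k => (diam (Y (t (phi k))))^-1 *: Y (t (phi k))) @ \oo --> Yinf /\
    (forall i j : 'I_n, i != j -> row i Yinf != row j Yinf).
Proof.
move=> hs hsn hp hA1 _ hY ht hD.
have hn : (1 < n)%N by apply: leq_trans hsn; rewrite ltnS.
have n0 : (0 < n)%N by apply: ltn_trans hn.
pose E0 := En gam p (Y 1).
pose c := expR (- (E0 * Pinv p)).
have c0 : 0 < c by exact: expR_gt0.
have hq : forall u a b, 1 <= u -> b != a -> c <= qmat gam (Y u) a b.
  move=> u a b u1 ba; apply: (q_lower gam p hA1 hp hn) => //.
  exact: (En_noninc gam p hA1 hp hn Y hY 1 u ltr01 u1).
have [A HA] : exists A : R, forall x, A < x -> 2 / c <= gam x.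
  case: hA1 => _ [_ [_ [_ [_ hg]]]].
  move/cvgryPge: hg => /(_ (2 / c)) [A [_ HA]].
  by exists A.
have ev : \forall k \near \oo, 1 <= t k /\ Num.max (A + 1) 1 <= diam (Y (t k)).
  move/cvgryPge : (ht) => /(_ 1) ht1.
  move/cvgryPge : (hD) => /(_ (Num.max (A + 1) 1)) hD1.
  by near=> k; split; near: k.
case: ev => N _ HN.
pose t' k := t (k + N).
have Ht : forall k, 1 <= t' k /\ Num.max (A + 1) 1 <= diam (Y (t' k)).
  by move=> k; apply: HN; rewrite /= leq_addl.
have t0 : forall k, 0 < t' k by move=> k; apply: lt_le_trans ltr01 (Ht k).1.
have D1 : forall k, 1 <= diam (Y (t' k)).
  by move=> k; apply: le_trans (Ht k).2; rewrite le_max lexx orbT.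
have DA : forall k, A + 1 <= diam (Y (t' k)).
  by move=> k; apply: le_trans (Ht k).2; rewrite le_max lexx.
have D0 : forall k, 0 < diam (Y (t' k)) by move=> k; apply: lt_le_trans ltr01 (D1 k).
pose Nk k := (diam (Y (t' k)))^-1 *: Y (t' k).
pose C l := \sum_(j < n) Y 1 j l.
have bnd : forall ij : 'I_n * 'I_s, exists B : R, forall k, `|Nk k ij.1 ij.2| <= B.
  move=> [i l]; exists (1 + `|C l| / n%:R) => k /=.
  rewrite /Nk mxE normrM normfV (gtr0_norm (D0 k)).
  have eb := entry_bound (Y (t' k)) i l n0.
  rewrite (Cen_const gam p hp Y hY (t' k) 1 l (t0 k) ltr01) -/(C l) in eb.
  rewrite ler_pdivrMl // mulrDr mulr1; apply: le_trans eb _.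
  rewrite lerD2l ler_peMl // ?divr_ge0 //.
have [psi [Hpsi Hcv]] := multi_bw (fun (ij : 'I_n * 'I_s) (k : nat) => Nk k ij.1 ij.2)
  (enum (predT : pred ('I_n * 'I_s))) bnd.
pose Yinf := \matrix_(i < n, l < s) limn (fun k => Nk (psi k) i l).
have cvY : (fun k => Nk (psi k)) @ \oo --> Yinf.
  apply: mx_cvg_entries => i l; rewrite mxE.
  by apply: (Hcv (i, l)); rewrite mem_enum.
have lowb : forall k i j, j != i -> c / 2 <= d2 (Nk k) i j.
  move=> k i j ji.
  have [a [b Dab]] := diam_attained (Y (t' k)) (D0 k).
  set D := diam (Y (t' k)) in Dab *.
  have Xab : D ^+ 2 = d2 (Y (t' k)) a b by rewrite Dab sqr_sqrtr // d2_ge0.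
  have ba : b != a.
    apply/negP => /eqP eba; move: (D0 k); rewrite -/D Dab eba d2_ii sqrtr0 ltxx //.
  have D2 : 0 < D ^+ 2 by rewrite exprn_gt0 // D0.
  have hg : 2 / c <= gam (D ^+ 2).
    apply: HA; have := DA k; have := D1 k; rewrite -/D => h1 h2; nra.
  have g := geom gam hA1 hn (Y (t' k)) c (D ^+ 2) a b i j c0 D2 Xab
    (d2_le_diam (Y (t' k))) (hq (t' k) a b (Ht k).1 ba) hg ji.
  rewrite /Nk d2_scale -/D.
  have -> : D^-1 ^+ 2 * d2 (Y (t' k)) i j = d2 (Y (t' k)) i j / D ^+ 2.
    by rewrite exprVn mulrC.
  by rewrite ler_pdivlMr.
exists (fun k => (psi k + N)%N), Yinf; split; [|split].
- by move=> k; rewrite ltn_add2r.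
- exact: cvY.
- move=> i j ij; apply/negP => /eqP rij.
  have dY0 : d2 Yinf i j = 0.
    rewrite /d2 big1 // => l _.
    have := congr1 (fun r : 'rV[R]_s => r 0 l) rij; rewrite /= !mxE => ->.
    by rewrite subrr expr0n.
  have hc := d2_cvg _ _ i j cvY.
  rewrite dY0 in hc.
  have c20 : 0 < c / 2 by rewrite divr_gt0.
  have [M _ HM] := cvgr_lt _ hc _ c20.
  have := HM M (leqnn M) => /=.
  rewrite ltNge (lowb (psi M) i j) //.
  by rewrite eq_sym.
Unshelve. all: end_near.
Qed.
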